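(* Let $1 \leq p < +\infty$ and let $\mathbb{P}$ be a Borel probability measure over $\mathbb{R}$ (i.e. a probability measure defined on the Borel $\sigma$-algebra $\mathcal{B}_{\mathbb{R}}$ of $\mathbb{R}$). Then for every real number $M \geq 0$, the set of $M$-sensitive random variables is dense in $L^{p}(\mathbb{R}, \mathcal{B}_{\mathbb{R}}, \mathbb{P})$ with respect to the $L^{p}$-norm: for every $X \in L^{p}(\mathbb{R}, \mathcal{B}_{\mathbb{R}}, \mathbb{P})$ and every $\varepsilon > 0$ there is an $M$-sensitive random variable $Y$ with $\|Y - X\|_{L^{p}(\mathbb{P})} < \varepsilon$.
   Context: A Borel random variable on $\mathbb{R}$ is an $\mathbb{R}$-valued Borel-measurable function defined on $\mathbb{R}$. Given a real number $M \geq 0$, a Borel random variable $Y$ on $\mathbb{R}$ is called $M$-sensitive if and only if $Y \in L^{\infty}(\mathbb{R}, \mathcal{B}_{\mathbb{R}}, \mathbb{P})$, $Y$ is differentiable at Lebesgue-almost every point of $\mathbb{R}$, and $|Y'(x)| > M$ at every point $x$ at which $Y$ is differentiable. *)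

(* Defs.v *)
From HB Require Import structures.
From mathcomp Require Import all_boot all_order all_algebra.
From mathcomp Require Import all_classical all_reals all_analysis.

Set Implicit Arguments.
Unset Strict Implicit.
Unset Printing Implicit Defensive.
Import Order.TTheory GRing.Theory Num.Theory.
Local Open Scope classical_set_scope.
Local Open Scope ring_scope.

(* A Borel random variable on R is a function R -> R; the measurable space
   structure on R in mathcomp-analysis is the Borel sigma-algebra. *)
Definition M_sensitive (R : realType) (P : probability R R) (M : R)
    (Y : R -> R) : Prop :=
  [/\ Y \in Lfun P +oo%E,
      {ae (@lebesgue_measure R), forall x, derivable Y x 1}
    & forall x : R, derivable Y x 1 -> M < `| derive1 Y x |].

(* Main.v *)
Require Import Defs.
From HB Require Import structures.
From mathcomp Require Import all_boot all_order all_algebra.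
From mathcomp Require Import all_classical all_reals all_analysis.
From mathcomp Require Import measurable_realfun.
From mathcomp Require Import ring lra zify.
Import Order.TTheory GRing.Theory Num.Theory.
Local Open Scope classical_set_scope.
Local Open Scope ring_scope.

Section Grid.
Context (R : realType).

Definition gridf (h : R) (G : int -> R) (x : R) : R := G (Num.floor (x / h)).

Lemma cellE (h : R) (k : int) : 0 < h ->
  [set x : R | Num.floor (x / h) = k] = `[k%:~R * h, (k + 1)%:~R * h[%classic.
Proof.
move=> h0; apply/seteqP; split => x /=; rewrite in_itv /=.
  by move/eqP; rewrite floor_eq ler_pdivlMr// ltr_pdivrMr.
by move=> H; apply/eqP; rewrite floor_eq ler_pdivlMr// ltr_pdivrMr.
Qed.

Lemma measurable_cell (h : R) (k : int) : 0 < h ->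
  measurable [set x : R | Num.floor (x / h) = k].
Proof. by move=> h0; rewrite cellE. Qed.

Lemma measurable_gridf (h : R) (G : int -> R) : 0 < h ->
  measurable_fun setT (gridf h G).
Proof.
move=> h0 _ B mB; rewrite setTI.
have -> : gridf h G @^-1` B =
    \bigcup_(k : int) [set x | Num.floor (x / h) = k /\ B (G k)].
  apply/seteqP; split => x /=.
    by move=> Bx; exists (Num.floor (x / h)).
  by case=> k _ [<-].
apply: countable_bigcupT_measurable => // k.
have [BG|BG] := pselect (B (G k)).
  have -> : [set x | Num.floor (x / h) = k /\ B (G k)] =
      [set x | Num.floor (x / h) = k].
    by apply/seteqP; split => x /=; [case|].
  exact: measurable_cell.
have -> : [set x | Num.floor (x / h) = k /\ B (G k)] = set0.
  by apply/seteqP; split => x //= [].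
exact: measurable0.
Qed.

Lemma measurable_gridP (h : R) (Q : int -> Prop) : 0 < h ->
  measurable [set x : R | Q (Num.floor (x / h))].
Proof.
move=> h0.
have -> : [set x : R | Q (Num.floor (x / h))] =
    \bigcup_(k : int) [set x | Num.floor (x / h) = k /\ Q k].
  apply/seteqP; split => x /=.
    by move=> Bx; exists (Num.floor (x / h)).
  by case=> k _ [<-].
apply: countable_bigcupT_measurable => // k.
have [BG|BG] := pselect (Q k).
  have -> : [set x | Num.floor (x / h) = k /\ Q k] =
      [set x | Num.floor (x / h) = k].
    by apply/seteqP; split => x /=; [case|].
  exact: measurable_cell.
have -> : [set x | Num.floor (x / h) = k /\ Q k] = set0.
  by apply/seteqP; split => x //= [].
exact: measurable0.
Qed.

End Grid.
Arguments gridf {R}.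

Lemma sum_indic_range (R : realType) (T : Type) (s : T -> R) (r : seq R) x :
  uniq r -> s x \in r -> s x = \sum_(y <- r) y * \1_(s @^-1` [set y]) x.
Proof.
move=> ur sr; rewrite (bigD1_seq (s x)) //= indicE mem_set// mulr1.
rewrite big1 ?addr0// => y ysx; rewrite indicE memNset ?mulr0//= => sxy.
by rewrite sxy eqxx in ysx.
Qed.

Lemma floor_cellP (R : realType) (h : R) (k : int) (y : R) : 0 < h ->
  k%:~R * h <= y < k%:~R * h + h -> Num.floor (y / h) = k.
Proof.
move=> h0 H; apply/eqP; rewrite floor_eq ler_pdivlMr// ltr_pdivrMr//.
by rewrite intrD mulrDl mul1r.
Qed.

Section Aux.
Context (R : realType) (P : probability R R) (p : R).
Hypothesis p1 : 1 <= p.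

Let p0 : 0 < p. Proof. exact: (lt_le_trans ltr01 p1). Qed.

Local Notation N f := ('N[P]_p%:E [EFin \o (f)%R])%E.

Lemma Lnorm_le (f : R -> R) (e : R) : 0 <= e ->
  (\int[P]_x ((`|f x| `^ p)%:E) <= (e `^ p)%:E)%E -> (N f <= e%:E)%E.
Proof.
move=> e0 H; rewrite unlock /=.
apply: le_trans.
  apply: (gt0_ler_poweR (r:=p^-1)); last exact: H.
  - by rewrite invr_ge0 ltW.
  - by rewrite in_itv /= leey andbT integral_ge0// => x _; rewrite lee_fin powR_ge0.
  - by rewrite in_itv /= leey andbT lee_fin powR_ge0.
by rewrite poweR_EFin -powRrM mulfV ?gt_eqF// powRr1.
Qed.

Lemma Lnorm_bound (f : R -> R) (c : R) (B : set R) (e : R) :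
  measurable_fun setT f -> measurable B -> 0 <= c -> 0 <= e ->
  (forall x, `|f x| <= c * \1_B x) ->
  ((c `^ p)%:E * P B <= (e `^ p)%:E)%E -> (N f <= e%:E)%E.
Proof.
move=> mf mB c0 e0 fB H; apply: Lnorm_le => //.
apply: le_trans H.
have -> : P B = (\int[P]_x (\1_B x)%:E)%E by rewrite integral_indic// setIT.
rewrite -ge0_integralZl_EFin//; last 2 first.
- by apply/measurable_EFinP; exact: measurable_indic.
- exact: powR_ge0.
under [X in (_ <= X)%E]eq_integral do rewrite -EFinM.
apply: ge0_le_integral => //.
- apply/measurable_EFinP.
  apply: (@measurableT_comp _ _ _ _ _ _ (@powR R ^~ p)) => //.
  exact: measurableT_comp.
- by apply/measurable_EFinP; apply: measurable_funM => //.
move=> x _; rewrite lee_fin.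
have := fB x; rewrite indicE; case: (x \in B) => /=.
  rewrite !mulr1 => fc; apply: ge0_ler_powR => //; exact: ltW.
rewrite /= !mulr0n !mulr0 => f0; have -> : `|f x| = 0 by apply/le_anti; rewrite f0 normr_ge0.
by rewrite powR0 ?gt_eqF.
Qed.

Lemma cvge0_lt (u : nat -> \bar R) (c : R) :
  (u n @[n --> \oo] --> 0%E) -> 0 < c -> exists n, (u n < c%:E)%E.
Proof.
move=> /fine_cvgP[ufin] /cvgrPdist_lt uc c0.
have H : \forall n \near \oo, u n \is a fin_num /\ `|0 - fine (u n)| < c.
  by near=> n; split; [near: n; exact: ufin | near: n; exact: (uc _ c0)].
have [n [un1 un2]] := filter_ex H.
exists n; rewrite -(fineK un1) lte_fin.
by move: un2; rewrite sub0r normrN => /(le_lt_trans (ler_norm _)).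
Unshelve. all: by end_near.
Qed.

Lemma NDlt (f g : R -> R) (a b : R) :
  measurable_fun setT f -> measurable_fun setT g ->
  (N f < a%:E)%E -> (N g < b%:E)%E -> (N (fun x => f x + g x) < (a + b)%:E)%E.
Proof.
move=> mf mg fa gb.
apply: le_lt_trans (minkowski_EFin P mf mg p1) _.
by rewrite EFinD; apply: lteD.
Qed.

Definition goodF (f : R -> R) := measurable_fun setT f /\
  forall e : R, 0 < e -> exists2 h0 : R, 0 < h0 & forall h : R, 0 < h -> h <= h0 ->
    exists G : int -> R, (exists B, forall k, `|G k| <= B) /\
      (N (fun x => gridf h G x - f x) < e%:E)%E.

Lemma goodF0 : goodF (fun _ => 0).
Proof.
split; first exact: measurable_cst.
move=> e e0; exists 1 => // h h0 _; exists (fun _ => 0); split.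
  by exists 0 => k; rewrite normr0.
apply: (@le_lt_trans _ _ 0%:E); last by rewrite lte_fin.
apply: Lnorm_le => //.
under eq_integral do rewrite /gridf subr0 normr0 powR0 ?gt_eqF//.
by rewrite integral0 powR0 ?gt_eqF.
Qed.

Lemma goodF_add (f g : R -> R) : goodF f -> goodF g ->
  goodF (fun x => f x + g x).
Proof.
move=> [mf Hf] [mg Hg]; split; first exact: measurable_funD.
move=> e e0; have e20 : 0 < e / 2 by rewrite divr_gt0.
have [h1 h10 H1] := Hf _ e20; have [h2 h20 H2] := Hg _ e20.
exists (Num.min h1 h2); first by rewrite lt_min h10 h20.
move=> h h0; rewrite le_min => /andP[hh1 hh2].
have [G1 [[B1 GB1] N1]] := H1 h h0 hh1.
have [G2 [[B2 GB2] N2]] := H2 h h0 hh2.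
exists (fun k => G1 k + G2 k); split.
  by exists (B1 + B2) => k; rewrite (le_trans (ler_normD _ _))// lerD.
have -> : (fun x => gridf h (fun k => G1 k + G2 k) x - (f x + g x)) =
   (fun x => (gridf h G1 x - f x) + (gridf h G2 x - g x)).
  by apply/funext => x; rewrite /gridf; ring.
rewrite [e](splitr e); apply: NDlt => //.
  by apply: measurable_funB => //; exact: measurable_gridf.
by apply: measurable_funB => //; exact: measurable_gridf.
Qed.

Lemma goodF_sum (I : Type) (s : seq I) (F : I -> R -> R) :
  (forall i, goodF (F i)) -> goodF (fun x => \sum_(i <- s) F i x).
Proof.
move=> HF; elim: s => [|a s IH].
  by under eq_fun do rewrite big_nil; exact: goodF0.
under eq_fun do rewrite big_cons.
exact: goodF_add.
Qed.

Lemma goodF_lim (f : R -> R) : measurable_fun setT f ->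
  (forall e, 0 < e -> exists g, goodF g /\ (N (fun x => g x - f x) < e%:E)%E) ->
  goodF f.
Proof.
move=> mf H; split => // e e0; have e20 : 0 < e / 2 by rewrite divr_gt0.
have [g [[mg Hg] Ng]] := H _ e20.
have [h0 h00 H0] := Hg _ e20.
exists h0 => // h h0' hh0.
have [G [GB NG]] := H0 h h0' hh0.
exists G; split => //.
have -> : (fun x => gridf h G x - f x) =
   (fun x => (gridf h G x - g x) + (g x - f x)).
  by apply/funext => x; ring.
rewrite [e](splitr e); apply: NDlt => //.
  by apply: measurable_funB => //; exact: measurable_gridf.
exact: measurable_funB.
Qed.

Definition cellset (h : R) (S : set int) := [set x : R | S (Num.floor (x / h))].
Definition symD (A B : set R) := (A `\` B) `|` (B `\` A).

Lemma measurable_cellset h S : 0 < h -> measurable (cellset h S).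
Proof. exact: measurable_gridP. Qed.

Lemma measurable_symD A B : measurable A -> measurable B -> measurable (symD A B).
Proof. by move=> mA mB; apply: measurableU; apply: measurableD. Qed.

Definition goodS (A : set R) := measurable A /\
  forall e : R, 0 < e -> exists2 h0 : R, 0 < h0 & forall h : R, 0 < h -> h <= h0 ->
    exists S : set int, (P (symD A (cellset h S)) < e%:E)%E.

Lemma indic_diff (A B : set R) x : `|\1_B x - \1_A x| <= \1_(symD A B) x :> R.
Proof.
rewrite /symD !indicE.
have [xA|xA] := pselect (A x); have [xB|xB] := pselect (B x).
- by rewrite (mem_set xA) (mem_set xB) subrr normr0.
- by rewrite (mem_set xA) (memNset xB) mem_set /=; [rewrite sub0r normrN normr1|left].
- by rewrite (memNset xA) (mem_set xB) mem_set /=; [rewrite subr0 normr1|right].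
- by rewrite (memNset xA) (memNset xB) subrr normr0.
Qed.

Lemma goodS_indic (A : set R) (c : R) : goodS A -> goodF (fun x => c * \1_A x).
Proof.
move=> [mA HA]; split.
  by apply: measurable_funM => //; exact: measurable_indic.
move=> e e0.
pose q := `|c| `^ p.
have q0 : 0 <= q by exact: powR_ge0.
have e20 : 0 < e / 2 by rewrite divr_gt0.
pose et := (e / 2) `^ p / (q + 1).
have et0 : 0 < et by rewrite divr_gt0 ?powR_gt0//; lra.
have [h0 h00 H0] := HA _ et0; exists h0 => // h hpos hh0.
have [S PS] := H0 h hpos hh0.
exists (fun k => c * \1_S k); split.
  exists `|c| => k; rewrite normrM ler_piMr// indicE.
  by case: (k \in S); rewrite ?normr1 ?normr0.
apply: (@le_lt_trans _ _ (e / 2)%:E); last by rewrite lte_fin; lra.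
apply: (@Lnorm_bound _ `|c| (symD A (cellset h S))).
- apply: measurable_funB; first exact: measurable_gridf.
  by apply: measurable_funM => //; exact: measurable_indic.
- by apply: measurable_symD => //; exact: measurable_cellset.
- exact: normr_ge0.
- exact: ltW.
- move=> x; rewrite /gridf -mulrBr normrM ler_wpM2l//.
  have -> : \1_S (Num.floor (x / h)) = \1_(cellset h S) x :> R by [].
  exact: indic_diff.
- apply: le_trans (lee_wpmul2l _ (ltW PS)) _; first by rewrite lee_fin.
  rewrite -EFinM lee_fin /et mulrA ler_pdivrMr; last by lra.
  rewrite -/q; have := powR_ge0 (e / 2) p; nra.
Qed.

Lemma goodS0 : goodS set0.
Proof.
split; first exact: measurable0.
move=> e e0; exists 1 => // h _ _; exists set0.
have -> : symD set0 (cellset h set0) = set0.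
  by apply/seteqP; split => x //=; rewrite /symD /cellset /=; case => -[].
by rewrite measure0 lte_fin.
Qed.

Lemma goodS_C A : goodS A -> goodS (~` A).
Proof.
move=> [mA HA]; split; first exact: measurableC.
move=> e e0; have [h0 h00 H0] := HA _ e0; exists h0 => // h hp hh.
have [S PS] := H0 h hp hh; exists (~` S).
have -> : cellset h (~` S) = ~` cellset h S by reflexivity.
suff -> : symD (~` A) (~` cellset h S) = symD A (cellset h S) by [].
rewrite /symD !setDE !setCK setUC.
by rewrite (setIC (~` cellset h S)) (setIC (~` A)).
Qed.

Lemma goodS_U A B : goodS A -> goodS B -> goodS (A `|` B).
Proof.
move=> [mA HA] [mB HB]; split; first exact: measurableU.
move=> e e0; have e20 : 0 < e / 2 by rewrite divr_gt0.
have [h1 h10 H1] := HA _ e20; have [h2 h20 H2] := HB _ e20.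
exists (Num.min h1 h2); first by rewrite lt_min h10 h20.
move=> h h0; rewrite le_min => /andP[hh1 hh2].
have [S1 P1] := H1 h h0 hh1; have [S2 P2] := H2 h h0 hh2.
exists (S1 `|` S2).
have -> : cellset h (S1 `|` S2) = cellset h S1 `|` cellset h S2 by reflexivity.
have mc := measurable_cellset.
apply: le_lt_trans.
  apply: (@le_measure _ _ _ P _ (symD A (cellset h S1) `|` symD B (cellset h S2))).
  - by rewrite inE; apply: measurable_symD; apply: measurableU => //; exact: mc.
  - by rewrite inE; apply: measurableU; apply: measurable_symD => //; exact: mc.
  - move=> x; rewrite /symD /=; tauto.
apply: le_lt_trans (measureU2 _ _ _) _.
- by apply: measurable_symD => //; exact: mc.
- by apply: measurable_symD => //; exact: mc.
by rewrite [e](splitr e) EFinD; apply: lteD.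
Qed.

Lemma goodS_big (A : nat -> set R) n : (forall i, goodS (A i)) ->
  goodS (\big[setU/set0]_(i < n) A i).
Proof.
move=> HA; elim: n => [|n IH]; first by rewrite big_ord0; exact: goodS0.
by rewrite big_ord_recr /=; apply: goodS_U.
Qed.

Lemma goodS_approx A : measurable A ->
  (forall e : R, 0 < e -> exists B, goodS B /\ (P (symD A B) < e%:E)%E) -> goodS A.
Proof.
move=> mA H; split => // e e0; have e20 : 0 < e / 2 by rewrite divr_gt0.
have [B [[mB HB] PB]] := H _ e20.
have [h0 h00 H0] := HB _ e20; exists h0 => // h hp hh.
have [S PS] := H0 h hp hh; exists S.
have mc := measurable_cellset.
apply: le_lt_trans.
  apply: (@le_measure _ _ _ P _ (symD A B `|` symD B (cellset h S))).
  - by rewrite inE; apply: measurable_symD => //; exact: mc.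
  - by rewrite inE; apply: measurableU; apply: measurable_symD => //; exact: mc.
  - move=> x; rewrite /symD /=; have [xB|xB] := pselect (B x); tauto.
apply: le_lt_trans (measureU2 _ _ _) _.
- exact: measurable_symD.
- by apply: measurable_symD => //; exact: mc.
by rewrite [e](splitr e) EFinD; apply: lteD.
Qed.

Lemma goodS_bigcup (A : nat -> set R) : (forall n, goodS (A n)) ->
  goodS (\bigcup_n A n).
Proof.
move=> HA; have mA n : measurable (A n) by case: (HA n).
have mU : measurable (\bigcup_n A n) by exact: bigcupT_measurable.
apply: goodS_approx => // e e0.
pose B n := \bigcup_(i in `I_n) A i.
have mB n : measurable (B n) by apply: bigcup_measurable => i _.
pose C n := (\bigcup_n A n) `\` B n.
have mC n : measurable (C n) by exact: measurableD.
have C0 : \bigcap_n C n = set0.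
  apply/seteqP; split => x // /= H.
  have [[i _ Aix] _] := H 0%N I.
  have [_ /=] := H i.+1 I; apply; exists i => //=.
have : (P \o C) n @[n --> \oo] --> P (\bigcap_n C n).
  apply: nonincreasing_cvg_mu => //.
  - by rewrite (le_lt_trans (probability_le1 _ _))// ltry.
  - exact: bigcap_measurable.
  - move=> n m nm; apply/subsetPset => x [Ux nBx]; split => // -[i /= im Aix].
    by apply: nBx; exists i => //=; exact: leq_trans im nm.
rewrite C0 measure0 => /cvge0_lt/(_ e0) [n Pn].
exists (B n); split.
  by rewrite /B bigcup_mkord; exact: goodS_big.
apply: le_lt_trans Pn; apply: le_measure; rewrite ?inE.
- by apply: measurable_symD.
- exact: mC.
move=> x [[Ux nBx]|[Bx nUx]]; first by split.
by exfalso; apply: nUx; case: Bx => i _ Aix; exists i.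
Qed.

Lemma small_right (a e : R) : 0 < e ->
  exists2 h0 : R, 0 < h0 & (P `]a, (a + h0)%R[%classic < e%:E)%E.
Proof.
move=> e0.
pose F (n : nat) := `]a, a + n.+1%:R^-1[%classic.
have mF n : measurable (F n) by exact: measurable_itv.
have F0 : \bigcap_n F n = set0.
  apply/seteqP; split => x // /= H.
  have := H 0%N I; rewrite /F /= in_itv /= => /andP[ax _].
  pose n := Num.truncn ((x - a)^-1).
  have := H n I; rewrite /F /= in_itv /= => /andP[_].
  have : (x - a)^-1 < n.+1%:R by exact: truncnS_gt.
  move=> H1 H2.
  have : (n.+1%:R)^-1 < x - a.
    by rewrite -[ltRHS]invrK ltf_pV2 ?posrE ?invr_gt0 ?subr_gt0.
  by move=> H3; move: H2; rewrite -ltrBlDl => /(lt_trans H3); rewrite ltxx.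
have : (P \o F) n @[n --> \oo] --> P (\bigcap_n F n).
  apply: nonincreasing_cvg_mu => //.
  - by rewrite (le_lt_trans (probability_le1 _ _))// ltry.
  - exact: bigcap_measurable.
  - move=> n m nm; apply/subsetPset => x; rewrite /F /= !in_itv /= => /andP[-> xm].
    rewrite (lt_le_trans xm)// lerD2l lef_pV2 ?posrE// ler_nat.
    by rewrite ltnS.
rewrite F0 measure0 => /cvge0_lt/(_ e0) [n Pn].
by exists n.+1%:R^-1.
Qed.

Lemma goodS_ocitv (a b : R) : goodS `]a, b]%classic.
Proof.
split; first exact: measurable_itv.
move=> e e0; have e20 : 0 < e / 2 by rewrite divr_gt0.
have [ha ha0 Pa] := @small_right a _ e20; have [hb hb0 Pb] := @small_right b _ e20.
exists (Num.min ha hb); first by rewrite lt_min ha0 hb0.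
move=> h h0; rewrite le_min => /andP[hha hhb].
exists [set k : int | (a < k%:~R * h) && (k%:~R * h <= b)].
have mc := measurable_cellset.
apply: le_lt_trans.
  apply: (@le_measure _ _ _ P _ (`]a, (a + ha)%R[%classic `|` `]b, (b + hb)%R[%classic)).
  - by rewrite inE; apply: measurable_symD; [exact: measurable_itv | exact: mc].
  - by rewrite inE; apply: measurableU; exact: measurable_itv.
  - move=> x; rewrite /symD /cellset /= !in_itv /=.
    set k := Num.floor (x / h).
    have [kl kr] : k%:~R * h <= x /\ x < k%:~R * h + h.
      have := floor_itv (x / h); rewrite -/k => /andP[l r]; split.
        by rewrite -ler_pdivlMr.
      by move: r; rewrite ltr_pdivrMr// intrD mulrDl mul1r.
    case=> -[].
      move=> /andP[ax xb] /negP; rewrite negb_and -!ltNge => /orP[] H.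
        by left; apply/andP; split; lra.
      by lra.
    move=> /andP[akh khb] /negP; rewrite negb_and -!ltNge => /orP[] H.
      by lra.
    by right; apply/andP; split; lra.
apply: le_lt_trans (measureU2 _ _ _) _.
- exact: measurable_itv.
- exact: measurable_itv.
by rewrite [e](splitr e) EFinD; apply: lteD.
Qed.

Lemma measurable_goodS (A : set R) : measurable A -> goodS A.
Proof.
move=> mA.
have sG : sigma_algebra setT goodS.
  split; first exact: goodS0.
    by move=> B GB; rewrite setTD; exact: goodS_C.
  exact: goodS_bigcup.
apply: (smallest_sub sG _ mA).
by move=> _ [[a b] _ <-]; exact: goodS_ocitv.
Qed.

Lemma goodF_bounded (f : R -> R) (K : R) : measurable_fun setT f ->
  (forall x, `|f x| <= K) -> goodF f.
Proof.
move=> mf fK; apply: goodF_lim => // e e0.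
pose d := e / 2; have d0 : 0 < d by rewrite divr_gt0.
pose s x := (Num.floor (f x / d))%:~R * d.
have ms : measurable_fun setT s.
  exact: (measurableT_comp (@measurable_gridf R d (fun k : int => k%:~R * d) d0) mf).
exists s; split; last first.
  apply: (@le_lt_trans _ _ d%:E); last by rewrite lte_fin /d; lra.
  apply: (@Lnorm_bound _ d setT) => //.
  - exact: measurable_funB.
  - exact: ltW.
  - exact: ltW.
  - move=> x; rewrite indicE mem_set// mulr1 /s.
    have := floor_itv (f x / d) => /andP[l r].
    have l' : (Num.floor (f x / d))%:~R * d <= f x by rewrite -ler_pdivlMr.
    have r' : f x < (Num.floor (f x / d))%:~R * d + d.
      by move: r; rewrite ltr_pdivrMr// intrD mulrDl mul1r.
    rewrite ler_norml; apply/andP; split; lra.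
  - by rewrite probability_setT mule1.
pose lo := Num.floor (- K / d); pose hi := Num.floor (K / d).
pose J := [seq lo + (i%:Z) | i <- iota 0 (`|hi - lo|%N.+1)].
pose r := [seq j%:~R * d | j <- J].
have ur : uniq r.
  rewrite map_inj_uniq; last by move=> i j /mulIf; rewrite gt_eqF// => /(_ isT) /intr_inj.
  by rewrite map_inj_uniq ?iota_uniq// => i j /addrI [].
have sr x : s x \in r.
  apply/mapP; exists (Num.floor (f x / d)) => //.
  have : lo <= Num.floor (f x / d) <= hi.
    have := fK x; rewrite ler_norml => /andP[k1 k2].
    have di : 0 <= d^-1 by rewrite invr_ge0 ltW.
    by apply/andP; split; apply: le_floor; apply: ler_wpM2r.
  move=> /andP[l1 l2].
  apply/mapP; exists `|Num.floor (f x / d) - lo|%N; last by lia.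
  by rewrite mem_iota add0n ltnS; lia.
have -> : s = fun x => \sum_(y <- r) y * \1_(s @^-1` [set y]) x.
  by apply/funext => x; apply: sum_indic_range.
apply: goodF_sum => y; apply: goodS_indic; apply: measurable_goodS.
by rewrite -[X in measurable X]setTI; exact: ms.
Qed.

Lemma goodF_Lfun (X : R -> R) : X \in Lfun P p%:E -> goodF X.
Proof.
rewrite inE => /andP[]; rewrite inE /= => mX; rewrite inE /= /finite_norm.
rewrite unlock /= => /lty_poweRy; rewrite invr_eq0 gt_eqF// => /(_ isT) Xfin.
apply: goodF_lim => // e e0.
pose T (n : nat) := (cst (- n%:R) \max (cst n%:R \min X)).
have mT n : measurable_fun setT (T n).
  by apply: measurable_maxr => //; apply: measurable_minr.
have TE n x : T n x = Num.max (- n%:R) (Num.min n%:R (X x)) by [].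
have Tn n x : `|T n x| <= n%:R.
  rewrite TE ler_norml le_max lexx /= ge_max ge_min lexx /= andbT.
  have : 0 <= n%:R :> R by []. lra.
have TX n x : `|T n x - X x| <= `|X x| /\ (`|X x| <= n%:R -> T n x = X x).
  have n0 : 0 <= n%:R :> R by [].
  rewrite TE maxElt minElt.
  case: (lerP 0 (X x)) => h3; [rewrite (ger0_norm h3) | rewrite (ltr0_norm h3)];
  case: (ltrP (n%:R) (X x)) => h1 /=.
  - case: (ltrP (- n%:R) (n%:R)) => h2; split; rewrite ?ler_norml => *;
      solve [lra | apply/andP; split; lra].
  - case: (ltrP (- n%:R) (X x)) => h2; split; rewrite ?ler_norml => *;
      solve [lra | apply/andP; split; lra].
  - case: (ltrP (- n%:R) (n%:R)) => h2; split; rewrite ?ler_norml => *;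
      solve [lra | apply/andP; split; lra].
  - case: (ltrP (- n%:R) (X x)) => h2; split; rewrite ?ler_norml => *;
      solve [lra | apply/andP; split; lra].
have e20 : 0 < e / 2 by rewrite divr_gt0.
pose fn n x := (`|T n x - X x| `^ p)%:E.
pose g x := (`|X x| `^ p)%:E.
have mfn n : measurable_fun setT (fn n).
  apply/measurable_EFinP; apply: (@measurableT_comp _ _ _ _ _ _ (@powR R ^~ p)) => //.
  by apply: measurableT_comp => //; exact: measurable_funB.
have ig : P.-integrable setT g.
  apply/integrableP; split.
    apply/measurable_EFinP; apply: (@measurableT_comp _ _ _ _ _ _ (@powR R ^~ p)) => //.
    exact: measurableT_comp.
  have -> : (\int[P]_x `|g x|)%E = (\int[P]_x g x)%E.
    by apply: eq_integral => x _; rewrite /g abse_EFin ger0_norm// powR_ge0.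
  exact: Xfin.
have := @dominated_convergence _ _ _ P setT measurableT fn (cst 0%E) g mfn
  (measurable_cst _) _ ig _.
case.
- apply: aeW => x _; apply: cvg_near_cst; near=> n.
  rewrite /fn (proj2 (TX n x)) ?subrr ?normr0 ?powR0 ?gt_eqF//.
  near: n; exact: nbhs_infty_ger.
- apply: aeW => x n _; rewrite /fn /g abse_EFin ger0_norm ?powR_ge0// lee_fin.
  by apply: ge0_ler_powR; rewrite ?nnegrE ?(ltW p0)//; exact: (proj1 (TX n x)).
move=> _ Hc _.
have [n Hn] := cvge0_lt _ _ Hc (powR_gt0 p e20).
exists (T n); split; first exact: (goodF_bounded _ _ (mT n) (Tn n)).
apply: (@le_lt_trans _ _ (e / 2)%:E); last by rewrite lte_fin; lra.
apply: Lnorm_le; first exact: ltW.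
apply: ltW; move: Hn; congr (_ < _)%E; apply: eq_integral => x _.
by rewrite /fn sube0 abse_EFin ger0_norm ?powR_ge0.
Unshelve. all: by end_near.
Qed.


Lemma main_aux (M : R) : 0 <= M -> forall X : R -> R, X \in Lfun P p%:E ->
  forall eps : R, 0 < eps ->
  exists Y : R -> R, M_sensitive P M Y /\
    ('N[P]_p%:E [EFin \o (fun x => Y x - X x)%R] < eps%:E)%E.
Proof.
move=> M0 X HX eps eps0.
have [mX HG] := goodF_Lfun _ HX.
have e2 : 0 < eps / 2 by rewrite divr_gt0.
have [h0 h00 H0] := HG _ e2.
pose L := M + 1.
have L0 : 0 < L by rewrite /L; lra.
pose h := Num.min h0 (eps / (4 * L)).
have hpos : 0 < h by rewrite lt_min h00 divr_gt0 // mulr_gt0.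
have hh0 : h <= h0 by rewrite ge_min lexx.
have hL : L * h <= eps / 4.
  have : h <= eps / (4 * L) by rewrite ge_min lexx orbT.
  rewrite ler_pdivlMr ?mulr_gt0// => H.
  rewrite ler_pdivlMr//; nra.
have [G [[B GB] NG]] := H0 h hpos hh0.
pose fl x := Num.floor (x / h).
pose Y x := G (fl x) + L * (x - (fl x)%:~R * h).
have flx x : (fl x)%:~R * h <= x < (fl x)%:~R * h + h.
  have := floor_itv (x / h) => /andP[l r]; apply/andP; split.
    by rewrite -ler_pdivlMr.
  by move: r; rewrite ltr_pdivrMr// intrD mulrDl mul1r.
have Yloc x t : (fl x)%:~R * h <= t + x < (fl x)%:~R * h + h ->
    Y (t + x) = Y x + L * t.
  by move=> H; rewrite /Y (_ : fl (t + x) = fl x); [ring | exact: floor_cellP].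
have mY : measurable_fun setT Y.
  apply: measurable_funD; first exact: measurable_gridf.
  apply: measurable_funM => //; apply: measurable_funB => //.
  exact: (@measurable_gridf R h (fun k : int => k%:~R * h)).
exists Y; split; last first.
  have -> : (fun x => Y x - X x) =
      (fun x => L * (x - (fl x)%:~R * h) + (gridf h G x - X x)).
    by apply/funext => x; rewrite /Y /gridf /fl; ring.
  rewrite [eps](splitr eps); apply: NDlt => //.
  - apply: measurable_funM => //; apply: measurable_funB => //.
    exact: (@measurable_gridf R h (fun k : int => k%:~R * h)).
  - by apply: measurable_funB => //; exact: (@measurable_gridf R h G hpos).
  - apply: (@le_lt_trans _ _ (L * h)%:E); last by rewrite lte_fin; lra.
    apply: (@Lnorm_bound _ (L * h) setT).
    + apply: measurable_funM => //; apply: measurable_funB => //.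
      exact: (@measurable_gridf R h (fun k : int => k%:~R * h)).
    + exact: measurableT.
    + by rewrite mulr_ge0// ltW.
    + by rewrite mulr_ge0// ltW.
    + move=> x; rewrite indicE mem_set// mulr1 normrM gtr0_norm//.
      have := flx x => /andP[l r].
      rewrite ger0_norm ?subr_ge0// ler_wpM2l ?ltW//; lra.
    + by rewrite probability_setT mule1.
split.
- rewrite inE; apply/andP; split; first by rewrite inE.
  rewrite inE /= /finite_norm unlock /=.
  case: ifPn => _; last by rewrite ltry.
  apply: (@le_lt_trans _ _ (B + L * h)%:E); last by rewrite ltry.
  have -> : (abse \o (EFin \o Y)) = EFin \o (Num.norm \o Y).
    by apply/funext => x /=. 
  apply: ess_sup_inf.ess_sup_ler => x /=; rewrite lee_fin /Y.
  apply: le_trans (ler_normD _ _) _; apply: lerD => //.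
  have := flx x => /andP[l r].
  rewrite normrM gtr0_norm// ger0_norm ?subr_ge0// ler_wpM2l ?ltW//; lra.
- exists (range (fun k : int => k%:~R * h)); split.
  + apply: countable_measurable => //.
    exact: (sub_countable (card_image_le _ _)).
  + apply: countable_lebesgue_measure0.
    exact: (sub_countable (card_image_le _ _)).
  + move=> x /= ndx; apply: contrapT => nr; apply: ndx.
    have := flx x => /andP[l r].
    have l' : (fl x)%:~R * h < x.
      rewrite lt_neqAle l andbT; apply/negP => /eqP E.
      by apply: nr; exists (fl x).
    pose dd := Num.min (x - (fl x)%:~R * h) ((fl x)%:~R * h + h - x).
    have dd0 : 0 < dd by rewrite lt_min; apply/andP; split; lra.
    apply/cvg_ex; exists L; apply: cvg_near_cst.
    near=> t.
    have t0 : t != 0 by near: t; rewrite near_withinE; exact: nearW.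
    have td : `|t| < dd by near: t; exact: dnbhs0_lt.
    rewrite /= -[X in Y (X + x)]/(t * 1) mulr1 Yloc; last first.
      have dda : dd <= x - (fl x)%:~R * h by rewrite ge_min lexx.
      move: td; rewrite ltr_norml => /andP[t1]; rewrite lt_min => /andP[t2 t3].
      apply/andP; split; lra.
    by rewrite addrAC subrr add0r -[_ *: _]/(_ * _) mulrCA mulVf// mulr1.
- move=> x dY.
  rewrite derive1E /derive (cvg_at_rightE _ _ dY).
  have := flx x => /andP[l r].
  set lF := lim _.
  have -> : lF = L.
    rewrite /lF; apply: cvg_lim => //; apply: cvg_near_cst.
    near=> t.
    have t0 : 0 < t by near: t; exact: nbhs_right_gt.
    have t1 : t < (fl x)%:~R * h + h - x.
      by near: t; apply: nbhs_right_lt; lra.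
    rewrite /= -[X in Y (X + x)]/(t * 1) mulr1 Yloc; last by apply/andP; split; lra.
    by rewrite addrAC subrr add0r -[_ *: _]/(_ * _) mulrCA mulVf ?gt_eqF// mulr1.
  by rewrite gtr0_norm// /L; lra.
Unshelve. all: by end_near.
Qed.



End Aux.

Theorem theorem1 (R : realType) (p : R) (P : probability R R) :
  1 <= p ->
  forall M : R, 0 <= M ->
  forall X : R -> R, X \in Lfun P p%:E ->
  forall eps : R, 0 < eps ->
  exists Y : R -> R, M_sensitive P M Y /\
    ('N[P]_p%:E [EFin \o (fun x => Y x - X x)%R] < eps%:E)%E.
Proof.
move=> p1 M M0 X HX eps eps0.
exact: (@main_aux R P p p1 M M0 X HX eps eps0).
Qed.
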